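(* For every LCNF formula $\Phi$ and any two labelled clauses $C_1^{L_1}, C_2^{L_2} \in \Phi$ to which self-subsuming resolution applies, $\mathsf{MCS}(\mathsf{ssr}(\Phi, C_1^{L_1}, C_2^{L_2})) = \mathsf{MCS}(\Phi)$.
   Context: Fix a countable set $Lbls$ of labels. A labelled clause $C^L$ is a pair of a clause $C$ (a finite set of literals) and a finite set $L \subseteq Lbls$. An LCNF formula $\Phi$ is a finite set of labelled clauses; $Cls(\Phi) = \{C : C^L \in \Phi\}$ and $Lbls(\Phi) = \bigcup_{C^L\in\Phi} L$. $\Phi$ is satisfiable iff $Cls(\Phi)$ is. For $M \subseteq Lbls(\Phi)$, the induced subformula is $\Phi|_M = \{C^L \in \Phi : L \subseteq M\}$. A set $R \subseteq Lbls(\Phi)$ is an MCS of $\Phi$ if (i) $\Phi|_{Lbls(\Phi)\setminus R}$ is satisfiable and (ii) for every $l \in R$, $\Phi|_{(Lbls(\Phi)\setminus R)\cup\{l\}}$ is unsatisfiable; $\mathsf{MCS}(\Phi)$ is the set of all MCSes of $\Phi$. Self-subsuming resolution: if $C_1^{L_1} = (l \vee A)^{L_1}$ and $C_2^{L_2} = (\neg l \vee B)^{L_2}$ are in $\Phi$ with $A \subset B$ and $L_1 \subseteq L_2$, then $\mathsf{ssr}(\Phi, C_1^{L_1}, C_2^{L_2}) = (\Phi \setminus \{C_2^{L_2}\}) \cup \{B^{L_2}\}$. *)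

(* Defs.v *)
From HB Require Import structures.
From mathcomp Require Import all_boot.
From mathcomp Require Import finmap.
Set Implicit Arguments. Unset Strict Implicit. Unset Printing Implicit Defensive.
Local Open Scope fset_scope.

Section LCNF.
Variables (V : choiceType) (Lb : countType).

(* A literal is a variable with a polarity (true = positive). *)
Definition lit := (V * bool)%type.
Definition neg_lit (l : lit) : lit := (l.1, ~~ l.2).

Definition clause := {fset lit}.
Definition lclause := (clause * {fset Lb})%type.
Definition lcnf := {fset lclause}.

Definition Cls (Phi : lcnf) : {fset clause} := [fset c.1 | c in Phi].
Definition Lbls (Phi : lcnf) : {fset Lb} := \bigcup_(c <- Phi) c.2.

Definition lit_true (a : V -> bool) (l : lit) : bool := a l.1 == l.2.
Definition clause_sat (a : V -> bool) (C : clause) : Prop :=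
  exists2 l, l \in C & lit_true a l.
Definition cls_satisfiable (S : {fset clause}) : Prop :=
  exists a : V -> bool, forall C, C \in S -> clause_sat a C.
Definition satisfiable (Phi : lcnf) : Prop := cls_satisfiable (Cls Phi).

Definition induced (Phi : lcnf) (M : {fset Lb}) : lcnf :=
  [fset c in Phi | c.2 `<=` M].

Definition is_MCS (Phi : lcnf) (R : {fset Lb}) : Prop :=
  [/\ R `<=` Lbls Phi,
      satisfiable (induced Phi (Lbls Phi `\` R))
    & forall l, l \in R -> ~ satisfiable (induced Phi ((Lbls Phi `\` R) `|` [fset l]))].

(* ssr(Phi, C1^L1, C2^L2) = (Phi \ {C2^L2}) u {B^L2} *)
Definition ssr (Phi : lcnf) (c2 : lclause) (B : clause) : lcnf :=
  (Phi `\ c2) `|` [fset (B, c2.2)].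

End LCNF.

(* Main.v *)
Require Import Defs.
From mathcomp Require Import all_boot.
From mathcomp Require Import finmap.
Local Open Scope fset_scope.

Lemma satE (V : choiceType) (Lb : countType) (Phi : lcnf V Lb) :
  satisfiable Phi <-> exists a, forall c, c \in Phi -> clause_sat a c.1.
Proof.
split=> [[a Ha]|[a Ha]]; exists a.
- move=> c cP; apply: Ha; apply/imfsetP; by exists c.
- move=> C /imfsetP [c cP ->]; exact: Ha.
Qed.

Lemma LblsE (V : choiceType) (Lb : countType) (Phi : lcnf V Lb) x :
  (x \in Lbls Phi) = [exists c : Phi, x \in (val c).2].
Proof.
rewrite /Lbls; apply/idP/existsP.
- move=> /bigfcupP [c /andP [cP _] xc]. by exists [` cP].
- move=> [c xc]; apply/bigfcupP; exists (val c) => //.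
  by rewrite (valP c).
Qed.

Theorem proposition4 (V : choiceType) (Lb : countType) (Phi : lcnf V Lb)
  (C1 C2 : clause V) (L1 L2 : {fset Lb}) (l : lit V) (A B : clause V) :
  (C1, L1) \in Phi -> (C2, L2) \in Phi ->
  C1 = l |` A -> C2 = neg_lit l |` B ->
  A `<` B -> L1 `<=` L2 ->
  forall R : {fset Lb}, is_MCS (ssr Phi (C2, L2) B) R <-> is_MCS Phi R.
Proof.
move=> H1 H2 E1 E2 /andP [AB _] L12 R.
have HL : Lbls (ssr Phi (C2, L2) B) = Lbls Phi.
  apply/fsetP => x; rewrite !LblsE; apply/existsP/existsP.
  - move=> [[c cP] /= xc].
    move: (cP); rewrite /ssr !inE => /orP [/andP [_ cP']|/eqP ce].
      by exists [` cP'].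
    by exists [` H2]; move: xc; rewrite ce.
  - move=> [[c cP] /= xc].
    have [ce|cne] := eqVneq c (C2, L2).
      have cP' : (B, L2) \in ssr Phi (C2, L2) B by rewrite /ssr !inE eqxx orbT.
      by exists [` cP']; move: xc; rewrite ce.
    have cP' : c \in ssr Phi (C2, L2) B by rewrite /ssr !inE cne cP.
    by exists [` cP'].
have HS : forall M, satisfiable (induced (ssr Phi (C2, L2) B) M) <->
                    satisfiable (induced Phi M).
  move=> M; rewrite !satE; split=> [[a Ha]|[a Ha]]; exists a.
  - move=> c; rewrite /induced !inE => /andP [cP cM].
    have [ce|cne] := eqVneq c (C2, L2).
      have : clause_sat a B.
        by apply: (Ha (B, L2)); move: cM; rewrite ce /induced !inE eqxx orbT.
      by move=> [x xB xt]; exists x => //; rewrite ce /= E2 !inE xB orbT.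
    by apply: Ha; rewrite /induced !inE cne cP cM.
  - move=> c; rewrite /induced /ssr !inE => /andP [/orP [/andP [cne cP]|/eqP ce] cM].
      by apply: Ha; rewrite /induced !inE cP cM.
    subst c => /=.
    have L2M : L2 `<=` M by [].
    have [x xC1 xt] : clause_sat a C1.
      by apply: (Ha (C1, L1)); rewrite /induced !inE H1 /= (fsubset_trans L12 L2M).
    have [y yC2 yt] : clause_sat a C2.
      by apply: (Ha (C2, L2)); rewrite /induced !inE H2 /=.
    move: xC1; rewrite E1 !inE => /orP [/eqP xl|xA]; last first.
      by exists x => //; apply: (fsubsetP AB).
    move: yC2; rewrite E2 !inE => /orP [/eqP yl|yB]; last by exists y.
    exfalso; move: xt yt; rewrite /lit_true xl yl /neg_lit /=.
    by move=> /eqP ->; case: (l.2).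
rewrite /is_MCS HL; split=> [[h1 h2 h3]|[h1 h2 h3]]; split=> //.
- by apply/HS.
- by move=> x xR /HS; apply: h3.
- by apply/HS.
- by move=> x xR /HS; apply: h3.
Qed.
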